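(* There is a coreflection $\mathcal{S}\ell\dashv\bigwedge C^{op}$ between the category $\mathbf{Frm}$ of frames and the category of strong topological coframes; that is, $\mathcal S\ell:\mathbf{Frm}\to\mathbf{StrTopCoFrm}$ is left adjoint to $\bigwedge C^{op}$, and the unit $\Omega\to\bigwedge C^{op}(\mathcal S\ell(\Omega))$, $u\mapsto\mathfrak c(u)$, is an isomorphism.
   Context: A coframe is a complete lattice in which arbitrary infima distribute over binary suprema; coframe morphisms preserve arbitrary infima and finite suprema. A topological coframe is a coframe $L$ with a sublattice $C(L)$ of complemented elements (its closed elements); morphisms are coframe morphisms $\varphi$ with $\varphi(C(L))\subseteq C(L')$. A topological coframe is strong if $C(L)$ is closed under arbitrary infima taken in $L$; $\mathbf{StrTopCoFrm}$ denotes the full subcategory of strong ones. The functor $\bigwedge C^{op}$ sends a topological coframe $L$ to the frame $(\bigwedge C(L))^{op}$, where $\bigwedge C(L)$ is the set of infima of elements of $C(L)$ (a subcoframe of $L$), and acts on morphisms by restriction. For a frame $\Omega$, a sublocale is a subset $S\subseteq\Omega$ closed under arbitrary meets and such that $u\Rightarrow s\in S$ for all $u\in\Omega$, $s\in S$ ($\Rightarrow$ the Heyting implication); the sublocales ordered by inclusion form a coframe $\mathcal S\ell(\Omega)$. For $u\in\Omega$, the closed sublocale is $\mathfrak c(u)={\uparrow}u$; it is complemented in $\mathcal S\ell(\Omega)$ and $\mathfrak c:\Omega^{op}\to\mathcal S\ell(\Omega)$ is a coframe order-embedding. $\mathcal S\ell(\Omega)$ is made a topological coframe by $C(\mathcal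 S\ell(\Omega))=\{\mathfrak c(u):u\in\Omega\}$; for a frame morphism $\varphi:\Omega\to\Omega'$, $\mathcal S\ell(\varphi)$ is the unique coframe morphism $\mathcal S\ell(\Omega)\to\mathcal S\ell(\Omega')$ with $\mathfrak c(u)\mapsto\mathfrak c(\varphi(u))$. *)

(* Defs.v *)
From Stdlib Require Import PropExtensionality FunctionalExtensionality ProofIrrelevance.

Record CLat := {
  car :> Type;
  le : car -> car -> Prop;
  le_refl : forall x, le x x;
  le_trans : forall x y z, le x y -> le y z -> le x z;
  le_antisym : forall x y, le x y -> le y x -> x = y;
  sup : (car -> Prop) -> car;
  sup_ub : forall A x, A x -> le x (sup A);
  sup_least : forall A y, (forall x, A x -> le x y) -> le (sup A) y;
  inf : (car -> Prop) -> car;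
  inf_lb : forall A x, A x -> le (inf A) x;
  inf_greatest : forall A y, (forall x, A x -> le y x) -> le y (inf A) }.

Arguments le {c} _ _.
Arguments sup {c} _.
Arguments inf {c} _.
Arguments le_refl {c} _.
Arguments le_trans {c} _ _ _ _ _.
Arguments le_antisym {c} _ _ _ _.
Arguments sup_ub {c} _ _ _.
Arguments sup_least {c} _ _ _.
Arguments inf_lb {c} _ _ _.
Arguments inf_greatest {c} _ _ _.

Section Ops.
Context {L : CLat}.
Definition top : L := sup (fun _ => True).
Definition bot : L := inf (fun _ => True).
Definition meet (x y : L) : L := inf (fun z => z = x \/ z = y).
Definition join (x y : L) : L := sup (fun z => z = x \/ z = y).
Definition imp (u s : L) : L := sup (fun w => le (meet w u) s).
Definition complemented (x : L) : Prop :=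
  exists y, meet x y = bot /\ join x y = top.
End Ops.

Definition image {A B : Type} (f : A -> B) (P : A -> Prop) : B -> Prop :=
  fun y => exists x, P x /\ y = f x.

Definition is_frame (L : CLat) : Prop :=
  forall (x : L) (A : L -> Prop), meet x (sup A) = sup (image (meet x) A).

Definition is_coframe (L : CLat) : Prop :=
  forall (x : L) (A : L -> Prop), join x (inf A) = inf (image (join x) A).

Definition frame_hom {L M : CLat} (f : L -> M) : Prop :=
  (forall A : L -> Prop, f (sup A) = sup (image f A)) /\
  f top = top /\
  (forall x y : L, f (meet x y) = meet (f x) (f y)).

Definition coframe_hom {L M : CLat} (f : L -> M) : Prop :=
  (forall A : L -> Prop, f (inf A) = inf (image f A)) /\
  f bot = bot /\
  (forall x y : L, f (join x y) = join (f x) (f y)).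

Definition is_topcoframe (L : CLat) (C : L -> Prop) : Prop :=
  is_coframe L /\
  (forall x, C x -> complemented x) /\
  C bot /\ C top /\
  (forall x y, C x -> C y -> C (meet x y)) /\
  (forall x y, C x -> C y -> C (join x y)).

Definition is_strong (L : CLat) (C : L -> Prop) : Prop :=
  forall A : L -> Prop, (forall x, A x -> C x) -> C (inf A).

Definition topcoframe_hom {L M : CLat} (C : L -> Prop) (D : M -> Prop)
  (f : L -> M) : Prop :=
  coframe_hom f /\ (forall x, C x -> D (f x)).

Definition InfC (L : CLat) (C : L -> Prop) (x : L) : Prop :=
  exists A : L -> Prop, (forall y, A y -> C y) /\ x = inf A.

Lemma InfC_inf (L : CLat) (C : L -> Prop) (S : L -> Prop) :
  (forall x, S x -> InfC L C x) -> InfC L C (inf S).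
Proof.
  intros HS.
  exists (fun c => C c /\ exists s, S s /\ le s c); split.
  - intros y [Hy _]; exact Hy.
  - apply le_antisym.
    + apply inf_greatest; intros c [_ [s [Hs Hsc]]].
      eapply le_trans; [apply inf_lb; exact Hs | exact Hsc].
    + apply inf_greatest; intros s Hs.
      destruct (HS s Hs) as [A [HA ->]].
      apply inf_greatest; intros c Hc.
      apply inf_lb; split; [exact (HA c Hc)|].
      exists (inf A); split; [exact Hs | apply inf_lb; exact Hc].
Qed.

Definition InfCT (L : CLat) (C : L -> Prop) := {x : L | InfC L C x}.

Lemma InfCT_eq (L : CLat) (C : L -> Prop) (x y : InfCT L C) :
  proj1_sig x = proj1_sig y -> x = y.
Proof.
  destruct x as [x Hx], y as [y Hy]; simpl; intros ->.
  f_equal; apply proof_irrelevance.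
Qed.

(** The frame (/\ C(L))^op as a complete lattice: reversed order; joins are
    infima taken in L, meets are joins taken inside /\ C(L). *)
Definition InfCop (L : CLat) (C : L -> Prop) : CLat.
Proof.
  refine {|
    car := InfCT L C;
    le := fun x y => le (proj1_sig y) (proj1_sig x);
    sup := fun A => exist _ (inf (fun z => exists a, A a /\ z = proj1_sig a)) _;
    inf := fun A => exist _ (inf (fun z => InfC L C z /\
                                   forall a, A a -> le (proj1_sig a) z)) _ |}.
  - intros x; apply le_refl.
  - intros x y z H1 H2; eapply le_trans; eassumption.
  - intros x y H1 H2; apply InfCT_eq; apply le_antisym; assumption.
  - intros A x Hx; simpl; apply inf_lb; exists x; split; auto.
  - intros A y H; simpl; apply inf_greatest; intros z [a [Ha ->]]; apply H; exact Ha.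
  - intros A x Hx; simpl; apply inf_greatest; intros z [_ Hz]; apply Hz; exact Hx.
  - intros A y H; simpl; apply inf_lb; split; [exact (proj2_sig y)|].
    intros a Ha; apply H; exact Ha.
  Unshelve.
  + apply InfC_inf; intros z [a [_ ->]]; exact (proj2_sig a).
  + apply InfC_inf; intros z [Hz _]; exact Hz.
Defined.

Definition sublocale (O : CLat) (S : O -> Prop) : Prop :=
  (forall A : O -> Prop, (forall x, A x -> S x) -> S (inf A)) /\
  (forall u s : O, S s -> S (imp u s)).

Definition SlT (O : CLat) := {S : O -> Prop | sublocale O S}.

Lemma SlT_eq (O : CLat) (S T : SlT O) :
  (forall x, proj1_sig S x <-> proj1_sig T x) -> S = T.
Proof.
  destruct S as [S HS], T as [T HT]; simpl; intros H.
  assert (S = T) as <-.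
  { apply functional_extensionality; intros x; apply propositional_extensionality; apply H. }
  f_equal; apply proof_irrelevance.
Qed.

Lemma sublocale_cap (O : CLat) (P : SlT O -> Prop) :
  sublocale O (fun x => forall S, P S -> proj1_sig S x).
Proof.
  split.
  - intros A HA S HS. apply (proj1 (proj2_sig S)). intros x Hx; exact (HA x Hx S HS).
  - intros u s Hs S HS. apply (proj2 (proj2_sig S)). exact (Hs S HS).
Qed.

Definition Sl (O : CLat) : CLat.
Proof.
  refine {|
    car := SlT O;
    le := fun S T => forall x, proj1_sig S x -> proj1_sig T x;
    sup := fun F => exist _ (fun x => forall T : SlT O,
              (forall S, F S -> forall y, proj1_sig S y -> proj1_sig T y) ->
              proj1_sig T x) (sublocale_cap O _);
    inf := fun F => exist _ (fun x => forall S, F S -> proj1_sig S x)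
              (sublocale_cap O F) |}.
  - intros S x H; exact H.
  - intros S T U H1 H2 x Hx; auto.
  - intros S T H1 H2; apply SlT_eq; split; auto.
  - intros F S HS x Hx T HT; simpl; exact (HT S HS x Hx).
  - intros F T HT x Hx; simpl in Hx; exact (Hx T HT).
  - intros F S HS x Hx; simpl in Hx; exact (Hx S HS).
  - intros F T HT x Hx S HS; exact (HT S HS x Hx).
Defined.

Lemma meet_lb_l (L : CLat) (x y : L) : le (meet x y) x.
Proof. apply inf_lb; left; reflexivity. Qed.

Lemma closed_sublocale (O : CLat) (u : O) : sublocale O (fun x => le u x).
Proof.
  split.
  - intros A HA; apply inf_greatest; exact HA.
  - intros v s Hs. eapply le_trans; [|apply sup_ub].
    + apply le_refl.
    + simpl. eapply le_trans; [apply meet_lb_l | exact Hs].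
Qed.

Definition cl {O : CLat} (u : O) : Sl O :=
  exist (sublocale O) (fun x => le u x) (closed_sublocale O u).

Definition ClS (O : CLat) (S : Sl O) : Prop := exists u : O, S = cl u.

(* Main.v *)
Require Import Defs.
From Stdlib Require Import PropExtensionality FunctionalExtensionality ProofIrrelevance IndefiniteDescription.

Section Gen.
Context {L : CLat}.
Implicit Types x y z w a b c d : L.

Lemma eq_le x y : x = y -> le x y.
Proof. intros ->; apply le_refl. Qed.
Lemma meet_lb_r x y : le (meet x y) y.
Proof. apply inf_lb; right; reflexivity. Qed.
Lemma meet_lb_l' x y : le (meet x y) x.
Proof. apply inf_lb; left; reflexivity. Qed.
Lemma meet_glb x y z : le z x -> le z y -> le z (meet x y).
Proof. intros H1 H2; apply inf_greatest; intros w [-> | ->]; auto. Qed.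
Lemma join_ub_l x y : le x (join x y).
Proof. apply sup_ub; left; reflexivity. Qed.
Lemma join_ub_r x y : le y (join x y).
Proof. apply sup_ub; right; reflexivity. Qed.
Lemma join_lub x y z : le x z -> le y z -> le (join x y) z.
Proof. intros H1 H2; apply sup_least; intros w [-> | ->]; auto. Qed.
Lemma top_max x : le x top.
Proof. apply sup_ub; exact I. Qed.
Lemma bot_min x : le bot x.
Proof. apply inf_lb; exact I. Qed.
Lemma inf_ext (P Q : L -> Prop) : (forall z, P z <-> Q z) -> inf P = inf Q.
Proof. intros H; f_equal; apply functional_extensionality; intros;
  apply propositional_extensionality; auto. Qed.
Lemma sup_ext (P Q : L -> Prop) : (forall z, P z <-> Q z) -> sup P = sup Q.
Proof. intros H; f_equal; apply functional_extensionality; intros;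
  apply propositional_extensionality; auto. Qed.
Lemma top_inf_empty : top = inf (fun _ : L => False).
Proof. apply le_antisym; [apply inf_greatest; intros _ []| apply top_max]. Qed.
Lemma bot_sup_empty : bot = sup (fun _ : L => False).
Proof. apply le_antisym; [apply bot_min | apply sup_least; intros _ []]. Qed.
Lemma meet_comm x y : meet x y = meet y x.
Proof. apply inf_ext; intros; tauto. Qed.
Lemma join_comm x y : join x y = join y x.
Proof. apply sup_ext; intros; tauto. Qed.
Lemma meet_top_l y : meet top y = y.
Proof. apply le_antisym; [apply meet_lb_r | apply meet_glb; [apply top_max|apply le_refl]]. Qed.
Lemma meet_top_r y : meet y top = y.
Proof. rewrite meet_comm; apply meet_top_l. Qed.
Lemma join_bot_r x : join x bot = x.
Proof. apply le_antisym; [apply join_lub; [apply le_refl|apply bot_min] | apply join_ub_l]. Qed.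
Lemma join_bot_l x : join bot x = x.
Proof. rewrite join_comm; apply join_bot_r. Qed.
Lemma join_top_r x : join x top = top.
Proof. apply le_antisym; [apply top_max | apply join_ub_r]. Qed.
Lemma meet_bot_r x : meet x bot = bot.
Proof. apply le_antisym; [apply meet_lb_r | apply bot_min]. Qed.
Lemma meet_mono a a' b b' : le a a' -> le b b' -> le (meet a b) (meet a' b').
Proof. intros; apply meet_glb; [eapply le_trans; [apply meet_lb_l'|eauto] | eapply le_trans; [apply meet_lb_r|eauto]]. Qed.
Lemma join_mono a a' b b' : le a a' -> le b b' -> le (join a b) (join a' b').
Proof. intros; apply join_lub; [eapply le_trans; [eauto|apply join_ub_l] | eapply le_trans; [eauto|apply join_ub_r]]. Qed.
Lemma le_top_eq x : le top x -> x = top.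
Proof. intros; apply le_antisym; auto using top_max. Qed.
Lemma le_bot_eq x : le x bot -> x = bot.
Proof. intros; apply le_antisym; auto using bot_min. Qed.
Lemma image_pair {M : Type} (f : L -> M) x y (w : M) :
  image f (fun z => z = x \/ z = y) w <-> w = f x \/ w = f y.
Proof. split. intros [v [[-> | ->] ->]]; auto. intros [-> | ->]; [exists x|exists y]; auto. Qed.
End Gen.

Section Cofr.
Context {L : CLat} (HL : is_coframe L).
Implicit Types x y z w a b c d : L.

Lemma join_meet_distr x y z : join x (meet y z) = meet (join x y) (join x z).
Proof. unfold meet at 1; rewrite HL. apply inf_ext; intro; apply image_pair. Qed.

Lemma cof_i c d w : meet c d = bot -> le (meet (join c w) d) w.
Proof.
  intros H. eapply le_trans; [|apply eq_le; apply join_bot_r].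
  rewrite <- H, join_meet_distr. apply meet_mono; [rewrite join_comm; apply le_refl | apply join_ub_r].
Qed.

Lemma cof_ii c d y w : join c d = top -> le (meet y c) w -> le y (join w d).
Proof.
  intros H1 H2. eapply le_trans with (join d (meet y c)).
  - rewrite join_meet_distr. apply meet_glb; [apply join_ub_r|].
    rewrite join_comm, H1; apply top_max.
  - rewrite join_comm. apply join_mono; [exact H2|apply le_refl].
Qed.

Lemma cof_iii a b c y : le y b -> le y (join a c) -> le y (join (meet a b) (meet b c)).
Proof.
  intros H1 H2. rewrite join_meet_distr. apply meet_glb.
  - eapply le_trans; [exact H1|apply join_ub_r].
  - rewrite (join_comm (meet a b)), join_meet_distr. apply meet_glb.
    + rewrite join_comm; exact H2.
    + eapply le_trans; [exact H1|apply join_ub_r].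
Qed.

Lemma compl_unique c d d' : meet c d = bot -> join c d = top ->
  meet c d' = bot -> join c d' = top -> d = d'.
Proof.
  assert (K : forall e e', join c e = top -> meet c e' = bot -> le e' e).
  { intros e e' H2 H3. eapply le_trans; [|apply eq_le; apply join_bot_r].
    rewrite <- H3, join_meet_distr. apply meet_glb.
    - rewrite join_comm, H2; apply top_max.
    - apply join_ub_r. }
  intros; apply le_antisym; apply K; auto.
Qed.
End Cofr.

Section Frm.
Context {O : CLat} (HO : is_frame O).
Implicit Types x y z w a b c d m n p s u v : O.

Lemma meet_join_distr x y z : meet x (join y z) = join (meet x y) (meet x z).
Proof. unfold join at 1; rewrite HO. apply sup_ext; intro; apply image_pair. Qed.

Lemma imp_adj w u s : le (meet w u) s <-> le w (imp u s).
Proof.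
  split; intros H.
  - apply sup_ub; exact H.
  - eapply le_trans; [apply meet_mono; [exact H|apply le_refl]|].
    rewrite meet_comm; unfold imp at 1; rewrite HO.
    apply sup_least; intros v [w' [Hw' ->]]. rewrite meet_comm; exact Hw'.
Qed.

Lemma imp_intro w u s : le (meet w u) s -> le w (imp u s).
Proof. apply imp_adj. Qed.
Lemma imp_mp u s : le (meet u (imp u s)) s.
Proof. rewrite meet_comm; apply imp_adj, le_refl. Qed.
Lemma le_imp s u : le s (imp u s).
Proof. apply imp_intro, meet_lb_l'. Qed.
Lemma imp_top u s : le u s -> imp u s = top.
Proof. intros H; apply le_top_eq, imp_intro. eapply le_trans; [apply meet_lb_r|exact H]. Qed.
Lemma imp_mp_r u s : le (meet (imp u s) u) s.
Proof. apply imp_adj, le_refl. Qed.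
Lemma imp_mono2 u s s' : le s s' -> le (imp u s) (imp u s').
Proof. intros H; apply imp_intro; eapply le_trans; [apply imp_mp_r|exact H]. Qed.
Lemma imp_anti1 u u' s : le u' u -> le (imp u s) (imp u' s).
Proof. intros H; apply imp_intro; eapply le_trans; [apply meet_mono; [apply le_refl|exact H]|apply imp_mp_r]. Qed.
Lemma imp_meet u m n : imp u (meet m n) = meet (imp u m) (imp u n).
Proof.
  apply le_antisym.
  - apply meet_glb; apply imp_mono2; [apply meet_lb_l'|apply meet_lb_r].
  - apply imp_intro; apply meet_glb.
    + eapply le_trans; [apply meet_mono; [apply meet_lb_l'|apply le_refl]|apply imp_mp_r].
    + eapply le_trans; [apply meet_mono; [apply meet_lb_r|apply le_refl]|apply imp_mp_r].
Qed.
Lemma meet_assoc_le a b c : le (meet (meet a b) c) (meet (meet a c) b).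
Proof.
  apply meet_glb; [apply meet_glb|].
  - eapply le_trans; [apply meet_lb_l'|apply meet_lb_l'].
  - apply meet_lb_r.
  - eapply le_trans; [apply meet_lb_l'|apply meet_lb_r].
Qed.

Lemma subl_top (S : O -> Prop) : sublocale O S -> S top.
Proof. intros [H _]; rewrite top_inf_empty; apply H; intros _ []. Qed.
Lemma subl_meet (S : O -> Prop) m n : sublocale O S -> S m -> S n -> S (meet m n).
Proof. intros [H _] Hm Hn; apply H; intros x [-> | ->]; auto. Qed.

Definition Mset (S T : O -> Prop) (p : O) : Prop :=
  exists m n, S m /\ T n /\ p = meet m n.

Lemma Mset_subl S T : sublocale O S -> sublocale O T -> sublocale O (Mset S T).
Proof.
  intros HS HT. split.
  - intros A HA.
    exists (inf (fun m => S m /\ exists p, A p /\ le p m)),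
           (inf (fun n => T n /\ exists p, A p /\ le p n)).
    split; [apply (proj1 HS); intros x [Hx _]; exact Hx|].
    split; [apply (proj1 HT); intros x [Hx _]; exact Hx|].
    apply le_antisym.
    + apply meet_glb; apply inf_greatest; intros m [_ [p [Hp Hpm]]];
        (eapply le_trans; [apply inf_lb; exact Hp|exact Hpm]).
    + apply inf_greatest; intros p Hp.
      destruct (HA p Hp) as [m [n [Hm [Hn ->]]]].
      apply meet_mono; apply inf_lb; (split; [assumption|exists (meet m n); split; [exact Hp|]]);
        [apply meet_lb_l'|apply meet_lb_r].
  - intros u p [m [n [Hm [Hn ->]]]].
    exists (imp u m), (imp u n). split; [apply (proj2 HS); exact Hm|].
    split; [apply (proj2 HT); exact Hn|]. apply imp_meet.
Qed.

Definition oset (z : O) (n : O) : Prop := n = imp z n.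

Lemma imp_idem z p : imp z (imp z p) = imp z p.
Proof.
  apply le_antisym; [|apply le_imp].
  apply imp_intro.
  eapply le_trans; [apply meet_glb; [apply imp_mp_r|apply meet_lb_r]|apply imp_mp_r].
Qed.

Lemma oset_subl z : sublocale O (oset z).
Proof.
  split.
  - intros A HA. unfold oset. apply le_antisym; [apply le_imp|].
    apply inf_greatest; intros n Hn.
    eapply le_trans; [apply imp_mono2, inf_lb, Hn| apply eq_le; symmetry; apply HA, Hn].
  - intros u n Hn. unfold oset in *. apply le_antisym; [apply le_imp|].
    apply imp_intro. eapply le_trans; [|apply eq_le; symmetry; exact Hn].
    apply imp_intro. eapply le_trans; [apply meet_assoc_le|].
    eapply le_trans; [apply meet_mono; [apply imp_mp_r|apply le_refl]|apply imp_mp_r].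
Qed.

Definition Bset (a b : O) : O -> Prop := Mset (fun m => le a m) (oset b).

Lemma Bset_char a b p : Bset a b p <-> le (meet (join a p) (imp b p)) p.
Proof.
  split.
  - intros [m [n [Hm [Hn ->]]]]. apply meet_mono.
    + apply join_lub; [exact Hm|apply meet_lb_l'].
    + eapply le_trans; [apply imp_mono2, meet_lb_r|apply eq_le; symmetry; exact Hn].
  - intros H. exists (join a p), (imp b p). split; [apply join_ub_l|].
    split; [unfold oset; symmetry; apply imp_idem|].
    apply le_antisym; [apply meet_glb; [apply join_ub_r|apply le_imp]|exact H].
Qed.

Lemma Bset_mono a a' b b' p : le a' a -> le b b' -> Bset a b p -> Bset a' b' p.
Proof.
  intros H1 H2 H. apply Bset_char; apply Bset_char in H.
  eapply le_trans; [|exact H]. apply meet_mono.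
  - apply join_mono; [exact H1|apply le_refl].
  - apply imp_anti1; exact H2.
Qed.

Lemma Bset_le x z p : le z p -> Bset x z p -> le x p.
Proof.
  intros Hz H; apply Bset_char in H. eapply le_trans; [|exact H].
  apply meet_glb; [apply join_ub_l|]. rewrite imp_top by exact Hz; apply top_max.
Qed.

Lemma Bset_cl u p : le u p -> Bset u bot p.
Proof.
  intros H; apply Bset_char. eapply le_trans; [apply meet_lb_l'|].
  apply join_lub; [exact H|apply le_refl].
Qed.

Lemma Bset_subl a b : sublocale O (Bset a b).
Proof.
  apply Mset_subl; [apply (closed_sublocale O a)|apply oset_subl].
Qed.

Lemma Bset_zz z p : Bset z z p.
Proof.
  apply Bset_char. rewrite meet_comm, meet_join_distr.
  apply join_lub; [apply imp_mp_r|apply meet_lb_r].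
Qed.

Lemma repr_lemma (S : O -> Prop) p : sublocale O S ->
  (forall a b, (forall q, S q -> Bset a b q) -> Bset a b p) -> S p.
Proof.
  intros HS H.
  set (nu := inf (fun s => S s /\ le p s)).
  assert (Hnu : S nu) by (apply (proj1 HS); intros x [Hx _]; exact Hx).
  assert (Hpn : le p nu) by (apply inf_greatest; intros x [_ Hx]; exact Hx).
  assert (HB : Bset nu p p).
  { apply H. intros s Hs. apply Bset_char.
    rewrite meet_comm, meet_join_distr. apply join_lub; [|apply meet_lb_r].
    eapply le_trans; [apply meet_mono; [apply le_refl| apply inf_lb]|apply imp_mp].
    split; [apply (proj2 HS); exact Hs|].
    apply imp_intro. apply imp_mp. }
  apply Bset_char in HB.
  assert (E : p = nu).
  { apply le_antisym; [exact Hpn|]. eapply le_trans; [|exact HB].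
    apply meet_glb; [apply join_ub_l|]. rewrite imp_top by apply le_refl; apply top_max. }
  rewrite E; exact Hnu.
Qed.
End Frm.

Section SlL.
Context {O : CLat} (HO : is_frame O).

Lemma Sl_le (S T : Sl O) : le S T <-> (forall x, proj1_sig S x -> proj1_sig T x).
Proof. reflexivity. Qed.
Lemma Sl_inf_char (A : Sl O -> Prop) x : proj1_sig (inf A) x <-> forall S, A S -> proj1_sig S x.
Proof. reflexivity. Qed.
Lemma Sl_ext (S T : Sl O) : (forall x, proj1_sig S x <-> proj1_sig T x) -> S = T.
Proof. apply SlT_eq. Qed.

Definition Msl (S T : Sl O) : Sl O :=
  exist _ (Mset (proj1_sig S) (proj1_sig T)) (Mset_subl HO _ _ (proj2_sig S) (proj2_sig T)).

Lemma join_Sl (S T : Sl O) : join S T = Msl S T.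
Proof.
  apply le_antisym.
  - apply sup_least; intros z [-> | ->]; apply Sl_le; intros x Hx.
    + exists x, top; split; [exact Hx|]; split; [apply subl_top, proj2_sig|].
      symmetry; apply meet_top_r.
    + exists top, x; split; [apply subl_top, proj2_sig|]; split; [exact Hx|].
      symmetry; apply meet_top_l.
  - apply Sl_le; intros p [m [n [Hm [Hn ->]]]].
    apply subl_meet; [apply proj2_sig| |].
    + exact (proj1 (Sl_le _ _) (join_ub_l S T) m Hm).
    + exact (proj1 (Sl_le _ _) (join_ub_r S T) n Hn).
Qed.

Lemma Sl_bot_char p : proj1_sig (bot : Sl O) p <-> p = top.
Proof.
  split.
  - intros H. apply le_top_eq. exact (H (cl top) I).
  - intros -> S _. apply subl_top, proj2_sig.
Qed.

Lemma Sl_top_char p : proj1_sig (top : Sl O) p.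
Proof. apply (proj1 (Sl_le _ _) (top_max (cl bot))). apply bot_min. Qed.

Lemma cl_sup (A : O -> Prop) : cl (sup A) = inf (image cl A).
Proof.
  apply Sl_ext; intros p; split.
  - intros H S [a [Ha ->]]. simpl. eapply le_trans; [apply sup_ub; exact Ha|exact H].
  - intros H. simpl. apply sup_least; intros a Ha. exact (H (cl a) (ex_intro _ a (conj Ha eq_refl))).
Qed.

Lemma cl_top : cl (top : O) = (bot : Sl O).
Proof.
  apply Sl_ext; intros p. rewrite Sl_bot_char. simpl. split; [apply le_top_eq|intros ->; apply le_refl].
Qed.

Lemma cl_bot : cl (bot : O) = (top : Sl O).
Proof. apply Sl_ext; intros p; simpl; split; intros _; [apply Sl_top_char|apply bot_min]. Qed.

Lemma cl_meet (x y : O) : join (cl x) (cl y) = cl (meet x y).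
Proof.
  rewrite join_Sl. apply Sl_ext; intros p; simpl; split.
  - intros [m [n [Hm [Hn ->]]]]. apply meet_mono; assumption.
  - intros H. exists (join p x), (join p y).
    split; [apply join_ub_r|]; split; [apply join_ub_r|].
    apply le_antisym; [apply meet_glb; apply join_ub_l|].
    rewrite meet_join_distr by exact HO. apply join_lub; [apply meet_lb_r|].
    rewrite meet_comm, meet_join_distr by exact HO. apply join_lub; [apply meet_lb_r|].
    eapply le_trans; [|exact H]. rewrite meet_comm; apply le_refl.
Qed.

Lemma cl_join (x y : O) : meet (cl x) (cl y) = cl (join x y).
Proof.
  apply Sl_ext; intros p. unfold meet at 1. rewrite Sl_inf_char; simpl; split.
  - intros H. apply join_lub; [exact (H (cl x) (or_introl eq_refl))|exact (H (cl y) (or_intror eq_refl))].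
  - intros H S [-> | ->]; simpl; (eapply le_trans; [|exact H]); [apply join_ub_l|apply join_ub_r].
Qed.

Definition osl (z : O) : Sl O := exist _ (oset z) (oset_subl HO z).
Definition Bsl (a b : O) : Sl O := exist _ (Bset a b) (Bset_subl HO a b).

Lemma Bsl_join a b : Bsl a b = join (cl a) (osl b).
Proof. rewrite join_Sl. apply Sl_ext; intros p; reflexivity. Qed.

Lemma cl_osl_meet z : meet (cl z) (osl z) = bot.
Proof.
  apply Sl_ext; intros p. unfold meet at 1. rewrite Sl_bot_char, Sl_inf_char. split.
  - intros H. pose proof (H (cl z) (or_introl eq_refl)) as H1.
    pose proof (H (osl z) (or_intror eq_refl)) as H2. simpl in H1, H2. unfold oset in H2.
    rewrite H2. apply imp_top; auto.
  - intros -> S [-> | ->]; simpl; [apply top_max|]. unfold oset. symmetry; apply imp_top; auto; apply top_max.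
Qed.

Lemma cl_osl_join z : join (cl z) (osl z) = top.
Proof.
  apply le_antisym; [apply top_max|]. rewrite <- Bsl_join. apply Sl_le; intros p _.
  apply Bset_zz; exact HO.
Qed.

Lemma Sl_coframe : is_coframe (Sl O).
Proof.
  intros S A. apply le_antisym.
  - apply inf_greatest; intros y [T [HT ->]]. apply join_mono; [apply le_refl|apply inf_lb; exact HT].
  - rewrite join_Sl. apply Sl_le; intros p Hp.
    set (s := inf (fun s => proj1_sig S s /\ le p s)).
    assert (Hps : le p s) by (apply inf_greatest; intros x [_ Hx]; exact Hx).
    exists s, (imp s p). split; [apply (proj1 (proj2_sig S)); intros x [Hx _]; exact Hx|].
    split.
    + intros T HT. pose proof (Hp (join S T) (ex_intro _ T (conj HT eq_refl))) as Hj.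
      rewrite join_Sl in Hj. destruct Hj as [m [n [Hm [Hn E]]]].
      assert (Eq : imp s p = imp s n).
      { apply le_antisym.
        - apply imp_mono2; auto. rewrite E; apply meet_lb_r.
        - apply imp_intro; auto. rewrite E. apply meet_glb.
          + eapply le_trans; [apply meet_lb_r|]. apply inf_lb. split; [exact Hm|].
            rewrite E; apply meet_lb_l'.
          + apply imp_mp_r; auto. }
      rewrite Eq. apply (proj2 (proj2_sig T)); exact Hn.
    + apply le_antisym; [apply meet_glb; [exact Hps|apply le_imp; auto]|apply imp_mp; auto].
Qed.

Lemma part1 : is_topcoframe (Sl O) (ClS O) /\ is_strong (Sl O) (ClS O).
Proof.
  split; [split; [apply Sl_coframe|split; [|split; [|split; [|split]]]]|].
  - intros x [u ->]. exists (osl u); split; [apply cl_osl_meet|apply cl_osl_join].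
  - exists top; symmetry; apply cl_top.
  - exists bot; symmetry; apply cl_bot.
  - intros x y [u ->] [v ->]. exists (join u v); apply cl_join.
  - intros x y [u ->] [v ->]. exists (meet u v); apply cl_meet.
  - intros A HA. exists (sup (fun u => A (cl u))). apply Sl_ext; intros p. rewrite Sl_inf_char. split.
    + intros H. simpl. apply sup_least; intros u Hu; exact (H (cl u) Hu).
    + intros H S HS. destruct (HA S HS) as [u ->]. simpl.
      eapply le_trans; [exact (sup_ub (fun u => A (cl u)) u HS)|exact H].
Qed.
End SlL.

Section Univ.
Context {O L : CLat} (HO : is_frame O) (HL : is_coframe L) (F N : O -> L)
  (F1 : forall A, F (sup A) = inf (image F A)) (F2 : F top = bot)
  (F3 : forall x y, F (meet x y) = join (F x) (F y))
  (HN1 : forall z, meet (F z) (N z) = bot) (HN2 : forall z, join (F z) (N z) = top).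

Lemma F_anti x y : le x y -> le (F y) (F x).
Proof.
  intros H. assert (E : x = meet x y) by (apply le_antisym; [apply meet_glb; [apply le_refl|exact H]|apply meet_lb_l']).
  rewrite E at 1. rewrite F3. apply join_ub_r.
Qed.
Lemma F_join x y : F (join x y) = meet (F x) (F y).
Proof. unfold join at 1; rewrite F1. apply inf_ext; intros; apply image_pair. Qed.
Lemma F_bot : F bot = top.
Proof.
  rewrite bot_sup_empty, F1, top_inf_empty. apply inf_ext; intros z; split; [intros [x [[] _]]|intros []].
Qed.
Lemma N_bot : N bot = bot.
Proof. pose proof (HN1 bot) as H. rewrite F_bot, meet_top_l in H. exact H. Qed.

Definition G a b := join (F a) (N b).

Lemma Klem (K : O -> O -> Prop) x z :
  (forall p, (forall a b, K a b -> Bset a b p) -> Bset x z p) ->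
  le (inf (fun y => exists a b, K a b /\ y = G a b)) (G x z).
Proof.
  intros H. set (Y := inf (fun y => exists a b, K a b /\ y = G a b)).
  set (Y' := meet Y (F z)).
  set (P := sup (fun p => le Y' (F p))).
  assert (HFP : le Y' (F P)) by (unfold P; rewrite F1; apply inf_greatest; intros w [p [Hp ->]]; exact Hp).
  assert (HzP : le z P) by (apply sup_ub; apply meet_lb_r).
  assert (YG : forall a b, K a b -> le Y (G a b)) by (intros a b Hab; apply inf_lb; exists a, b; split; auto).
  assert (FimpP : forall b, le (meet (F P) (N b)) (F (imp b P))).
  { intros b. eapply le_trans; [apply meet_mono; [| apply le_refl]| apply (cof_i HL (F b) (N b) _ (HN1 b))].
    rewrite <- F3; apply F_anti; apply imp_mp; exact HO. }
  assert (HB : Bset x z P).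
  { apply H. intros a b Hab. apply Bset_char; auto. apply sup_ub.
    rewrite F3, F_join.
    eapply le_trans; [|apply join_mono; [apply le_refl|apply FimpP]].
    apply cof_iii; auto. eapply le_trans; [apply meet_lb_l'|apply YG; exact Hab]. }
  assert (HxP : le x P) by (eapply Bset_le; eauto).
  apply (cof_ii HL (F z) (N z) Y (F x) (HN2 z)).
  eapply le_trans; [exact HFP|apply F_anti; exact HxP].
Qed.

Definition g (S : Sl O) : L :=
  inf (fun y => exists a b, (forall q, proj1_sig S q -> Bset a b q) /\ y = G a b).

Lemma g_mono S T : le S T -> le (g S) (g T).
Proof.
  intros HST. apply inf_greatest; intros y [a [b [H ->]]]. apply inf_lb; exists a, b; split; [|reflexivity].
  intros q Hq; apply H; apply (proj1 (Sl_le _ _) HST); exact Hq.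
Qed.

Lemma g_cl u : g (cl u) = F u.
Proof.
  apply le_antisym.
  - eapply le_trans; [apply inf_lb; exists u, bot; split; [intros q Hq; apply Bset_cl; [exact HO|exact Hq]|reflexivity]|].
    unfold G; rewrite N_bot, join_bot_r; apply le_refl.
  - apply inf_greatest; intros y [a [b [H ->]]].
    eapply le_trans; [|apply (Klem (fun a' b' => a' = u /\ b' = bot) a b)].
    + apply inf_greatest; intros y [a' [b' [[-> ->] ->]]]. apply join_ub_l.
    + intros p Hp. apply H. exact (Bset_le HO u bot p (bot_min p) (Hp u bot (conj eq_refl eq_refl))).
Qed.

Lemma g_inf A : g (inf A) = inf (image g A).
Proof.
  apply le_antisym.
  - apply inf_greatest; intros y [S [HS ->]]; apply g_mono; apply inf_lb; exact HS.
  - apply inf_greatest; intros y [a [b [H ->]]].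
    eapply le_trans; [|apply (Klem (fun a' b' => exists S, A S /\ forall q, proj1_sig S q -> Bset a' b' q) a b)].
    + apply inf_greatest; intros y [a' [b' [[S [HS HSB]] ->]]].
      eapply le_trans; [apply inf_lb; exists S; split; [exact HS|reflexivity]|].
      apply inf_lb; exists a', b'; split; auto.
    + intros p Hp. apply H. apply Sl_inf_char; intros S HS.
      apply repr_lemma; auto; [apply proj2_sig|]. intros a' b' HB. apply Hp. exists S; auto.
Qed.

Lemma g_bot : g bot = bot.
Proof.
  apply le_bot_eq. eapply le_trans; [apply inf_lb; exists top, bot; split; [|reflexivity]|].
  - intros q Hq; apply Sl_bot_char in Hq; subst. apply Bset_char; auto; apply top_max.
  - unfold G; rewrite F2, N_bot, join_bot_r; apply le_refl.
Qed.

Lemma join_inf_inf (P Q : L -> Prop) y :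
  (forall p q, P p -> Q q -> le y (join p q)) -> le y (join (inf P) (inf Q)).
Proof.
  intros H. rewrite HL. apply inf_greatest; intros w [q [Hq ->]].
  rewrite join_comm, HL. apply inf_greatest; intros w [p [Hp ->]]. rewrite join_comm; auto.
Qed.

Lemma Njoin b b' : le (N (join b b')) (join (N b) (N b')).
Proof.
  set (M := N (join b b')).
  assert (HM : meet (meet (F b) (F b')) M = bot) by (rewrite <- F_join; apply HN1).
  rewrite join_comm. apply (cof_ii HL (F b) (N b) M (N b') (HN2 b)).
  rewrite <- (join_bot_l (N b')).
  apply (cof_ii HL (F b') (N b') (meet M (F b)) bot (HN2 b')).
  rewrite <- HM. apply meet_glb; [apply meet_glb|].
  - eapply le_trans; [apply meet_lb_l'|apply meet_lb_r].
  - apply meet_lb_r.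
  - eapply le_trans; [apply meet_lb_l'|apply meet_lb_l'].
Qed.

Lemma g_join S T : g (join S T) = join (g S) (g T).
Proof.
  apply le_antisym.
  - unfold g at 2 3. apply join_inf_inf.
    intros p q [a [b [Ha ->]]] [a' [b' [Hb ->]]].
    eapply le_trans; [apply inf_lb; exists (meet a a'), (join b b'); split; [|reflexivity]|].
    + rewrite (join_Sl HO). intros q [m [n [Hm [Hn ->]]]].
      apply (subl_meet _ m n (Bset_subl HO _ _)).
      * apply (Bset_mono HO a _ b _); [apply meet_lb_l'|apply join_ub_l|apply Ha, Hm].
      * apply (Bset_mono HO a' _ b' _); [apply meet_lb_r|apply join_ub_r|apply Hb, Hn].
    + unfold G. rewrite F3. apply join_lub; [apply join_lub|].
      * eapply le_trans; [apply join_ub_l|apply join_ub_l].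
      * eapply le_trans; [apply join_ub_l|apply join_ub_r].
      * eapply le_trans; [apply Njoin|]. apply join_mono; apply join_ub_r.
  - apply join_lub; apply g_mono; [apply join_ub_l|apply join_ub_r].
Qed.

Lemma g_unique g' : coframe_hom g' -> (forall u, g' (cl u) = F u) -> g' = g.
Proof.
  intros [H1 [H2 H3]] Hcl.
  assert (Hmeet : forall X Y, g' (meet X Y) = meet (g' X) (g' Y)).
  { intros; unfold meet at 1; rewrite H1; unfold meet; apply inf_ext; intros; apply image_pair. }
  assert (Htop : g' top = top).
  { rewrite (top_inf_empty (L:=Sl O)), H1, top_inf_empty; apply inf_ext; intros z; split; [intros [x [[] _]]|intros []]. }
  assert (Hosl : forall b, g' (osl HO b) = N b).
  { intros b. apply (compl_unique HL (F b)); [| | apply HN1| apply HN2].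
    - rewrite <- Hcl, <- Hmeet, cl_osl_meet; exact H2.
    - rewrite <- Hcl, <- H3, cl_osl_join; exact Htop. }
  assert (HB : forall a b, g' (Bsl HO a b) = G a b) by (intros; rewrite Bsl_join, H3, Hcl, Hosl; reflexivity).
  apply functional_extensionality; intros S.
  assert (ES : S = inf (fun T => exists a b, (forall q, proj1_sig S q -> Bset a b q) /\ T = Bsl HO a b)).
  { apply Sl_ext; intros p; rewrite Sl_inf_char; split.
    - intros Hp T [a [b [H ->]]]; simpl; apply H; exact Hp.
    - intros H. apply repr_lemma; auto; [apply proj2_sig|]. intros a b Hab.
      exact (H (Bsl HO a b) (ex_intro _ a (ex_intro _ b (conj Hab eq_refl)))). }
  rewrite ES at 1. rewrite H1. unfold g. apply inf_ext; intros y; split.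
  - intros [T [[a [b [Hab ->]]] ->]]. exists a, b; split; auto.
  - intros [a [b [Hab ->]]]. exists (Bsl HO a b); split; [exists a, b; auto| symmetry; apply HB].
Qed.

Lemma univ : exists g0 : Sl O -> L, coframe_hom g0 /\ (forall u, g0 (cl u) = F u) /\
   forall g', coframe_hom g' -> (forall u, g' (cl u) = F u) -> g' = g0.
Proof.
  exists g. split; [split; [apply g_inf|split; [apply g_bot|apply g_join]]|].
  split; [apply g_cl|apply g_unique].
Qed.
End Univ.

Lemma InfCop_sup_val (L : CLat) (C : L -> Prop) (A : InfCop L C -> Prop) :
  proj1_sig (sup A) = inf (fun z => exists a, A a /\ z = proj1_sig a).
Proof. reflexivity. Qed.

Section Strong.
Context {L : CLat} {C : L -> Prop} (HT : is_topcoframe L C) (HS : is_strong L C).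

Lemma InfC_C x : InfC L C x -> C x.
Proof. intros [A [HA ->]]; apply HS; exact HA. Qed.
Lemma C_InfC x : C x -> InfC L C x.
Proof.
  intros H; exists (fun y => y = x); split; [intros y ->; auto|].
  apply le_antisym; [apply inf_greatest; intros y ->; apply le_refl|apply inf_lb; reflexivity].
Qed.

Lemma InfCop_top_val : proj1_sig (top : InfCop L C) = bot.
Proof.
  unfold top. rewrite InfCop_sup_val. apply le_antisym; [|apply bot_min].
  destruct HT as [_ [_ [Hb _]]].
  apply inf_lb. exists (exist _ bot (C_InfC bot Hb) : InfCop L C); split; [exact I|reflexivity].
Qed.

Lemma InfCop_meet_val (x y : InfCop L C) : proj1_sig (meet x y) = join (proj1_sig x) (proj1_sig y).
Proof.
  unfold meet. simpl. apply le_antisym.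
  - apply inf_lb. split.
    + apply C_InfC. destruct HT as [_ [_ [_ [_ [_ Hj]]]]]. apply Hj; apply InfC_C, proj2_sig.
    + intros a [-> | ->]; [apply join_ub_l|apply join_ub_r].
  - apply inf_greatest; intros z [_ Hz]. apply join_lub; apply Hz; auto.
Qed.

Lemma part2 : is_frame (InfCop L C).
Proof.
  intros x A. apply InfCT_eq. rewrite InfCop_meet_val, !InfCop_sup_val.
  rewrite (proj1 HT). apply inf_ext; intros z; split.
  - intros [v [[a [Ha ->]] ->]]. exists (meet x a); split; [exists a; auto|].
    symmetry; apply InfCop_meet_val.
  - intros [a [[b [Hb ->]] ->]]. exists (proj1_sig b); split; [exists b; auto|apply InfCop_meet_val].
Qed.
End Strong.

Lemma inv_frame_hom {A B : CLat} (e : A -> B) (psi : B -> A) :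
  frame_hom e -> (forall u, psi (e u) = u) -> (forall x, e (psi x) = x) -> frame_hom psi.
Proof.
  intros [Hs [Ht Hm]] H1 H2. split; [|split].
  - intros P. rewrite <- (H1 (sup (image psi P))). f_equal. rewrite Hs. apply sup_ext; intros z; split.
    + intros Hz. exists (psi z); split; [exists z; auto|symmetry; apply H2].
    + intros [a [[b [Hb ->]] ->]]. rewrite H2; exact Hb.
  - rewrite <- Ht; apply H1.
  - intros x y. rewrite <- (H1 (meet (psi x) (psi y))), Hm, !H2. reflexivity.
Qed.

Theorem mainTheorem17 :
  (* Sl sends frames to strong topological coframes *)
  (forall O : CLat, is_frame O ->
     is_topcoframe (Sl O) (ClS O) /\ is_strong (Sl O) (ClS O)) /\
  (* /\C^op sends strong topological coframes to frames ... *)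
  (forall (L : CLat) (C : L -> Prop), is_topcoframe L C -> is_strong L C ->
     is_frame (InfCop L C)) /\
  (* ... and morphisms (by restriction) to frame morphisms *)
  (forall (L : CLat) (C : L -> Prop) (M : CLat) (D : M -> Prop) (g : L -> M),
     is_topcoframe L C -> is_strong L C -> is_topcoframe M D -> is_strong M D ->
     topcoframe_hom C D g ->
     exists h : InfCop L C -> InfCop M D,
       frame_hom h /\ forall x, proj1_sig (h x) = g (proj1_sig x)) /\
  (* Sl on morphisms: the unique coframe morphism with c(u) |-> c(phi u) *)
  (forall (O P : CLat) (phi : O -> P), is_frame O -> is_frame P -> frame_hom phi ->
     exists! g : Sl O -> Sl P, coframe_hom g /\ forall u, g (cl u) = cl (phi u)) /\
  (* universal property of the unit u |-> c(u) (Sl is left adjoint to /\C^op) *)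
  (forall (O : CLat) (L : CLat) (C : L -> Prop),
     is_frame O -> is_topcoframe L C -> is_strong L C ->
     forall f : O -> InfCop L C, frame_hom f ->
       exists! g : Sl O -> L,
         topcoframe_hom (ClS O) C g /\ forall u, g (cl u) = proj1_sig (f u)) /\
  (* the unit is an isomorphism of frames *)
  (forall O : CLat, is_frame O ->
     exists e : O -> InfCop (Sl O) (ClS O),
       (forall u, proj1_sig (e u) = cl u) /\ frame_hom e /\
       exists psi : InfCop (Sl O) (ClS O) -> O,
         frame_hom psi /\ (forall u, psi (e u) = u) /\ (forall x, e (psi x) = x)).
Proof.
  split; [|split; [|split; [|split; [|split]]]].
  - intros O HO; apply part1; exact HO.
  - intros L C HT HS; apply part2; assumption.
  - intros L C M D g HC HSC HD HSD [Hg HgC].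
    destruct Hg as [Hgi [Hgb Hgj]].
    exists (fun x : InfCop L C => (exist (InfC M D) (g (proj1_sig x))
              (C_InfC _ (HgC _ (InfC_C HSC _ (proj2_sig x)))) : InfCop M D)).
    split; [|intros; reflexivity].
    split; [|split].
    + intros A. apply InfCT_eq. simpl proj1_sig at 1. rewrite !InfCop_sup_val, Hgi.
      apply inf_ext; intros z; split.
      * intros [v [[a [Ha ->]] ->]]. eexists; split; [exists a; split; [exact Ha|reflexivity]|reflexivity].
      * intros [a [[b [Hb ->]] ->]]. exists (proj1_sig b); split; [exists b; auto|reflexivity].
    + apply InfCT_eq. rewrite (InfCop_top_val HD).
      change (g (proj1_sig (top : InfCop L C)) = bot). rewrite (InfCop_top_val HC). exact Hgb.
    + intros x y. apply InfCT_eq. rewrite (InfCop_meet_val HD HSD).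
      change (g (proj1_sig (meet x y)) = join (g (proj1_sig x)) (g (proj1_sig y))).
      rewrite (InfCop_meet_val HC HSC). apply Hgj.
  - intros O P phi HO HP [Hps [Hpt Hpm]].
    destruct (univ HO (Sl_coframe HP) (fun u => cl (phi u)) (fun u => osl HP (phi u)))
      as [g0 [Hg0 [Hcl Hun]]].
    + intros A. rewrite Hps, cl_sup. apply inf_ext; intros z; split.
      * intros [a [[b [Hb ->]] ->]]. exists b; auto.
      * intros [b [Hb ->]]. exists (phi b); split; [exists b; auto|reflexivity].
    + rewrite Hpt; apply cl_top.
    + intros x y. rewrite Hpm; symmetry; apply cl_meet; exact HP.
    + intros z; apply cl_osl_meet.
    + intros z; apply cl_osl_join.
    + exists g0. split; [split; assumption|]. intros g' [H1 H2]. symmetry; apply Hun; assumption.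
  - intros O L C HO HT HS f [Hfs [Hft Hfm]].
    set (F := fun u => proj1_sig (f u)).
    assert (HFC : forall u, C (F u)) by (intros u; apply (InfC_C HS), proj2_sig).
    set (N := fun z => proj1_sig (constructive_indefinite_description _
                (proj1 (proj2 HT) (F z) (HFC z)))).
    destruct (univ HO (proj1 HT) F N) as [g0 [Hg0 [Hcl Hun]]].
    + intros A. unfold F. rewrite Hfs, InfCop_sup_val. apply inf_ext; intros z; split.
      * intros [a [[b [Hb ->]] ->]]. exists b; auto.
      * intros [b [Hb ->]]. exists (f b); split; [exists b; auto|reflexivity].
    + unfold F. rewrite Hft. apply InfCop_top_val; assumption.
    + intros x y. unfold F. rewrite Hfm. apply InfCop_meet_val; assumption.
    + intros z. unfold N. destruct constructive_indefinite_description as [d [Hd1 Hd2]]. exact Hd1.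
    + intros z. unfold N. destruct constructive_indefinite_description as [d [Hd1 Hd2]]. exact Hd2.
    + exists g0. split.
      * split; [split; [exact Hg0|]|exact Hcl].
        intros x [u ->]. rewrite Hcl. apply HFC.
      * intros g' [[H1 _] H2]. symmetry; apply Hun; assumption.
  - intros O HO.
    destruct (part1 HO) as [HT HS].
    set (e := fun u : O => (exist (InfC (Sl O) (ClS O)) (cl u)
                 (C_InfC _ (ex_intro _ u eq_refl)) : InfCop (Sl O) (ClS O))).
    assert (He : frame_hom e).
    { split; [|split].
      - intros A. apply InfCT_eq. simpl proj1_sig at 1. rewrite InfCop_sup_val, cl_sup.
        apply inf_ext; intros z; split.
        + intros [a [Ha ->]]. exists (e a); split; [exists a; auto|reflexivity].
        + intros [a [[b [Hb ->]] ->]]. exists b; auto.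
      - apply InfCT_eq. simpl proj1_sig at 1. rewrite InfCop_top_val by assumption. apply cl_top.
      - intros x y. apply InfCT_eq. simpl proj1_sig at 1. rewrite InfCop_meet_val by assumption.
        symmetry; apply cl_meet; exact HO. }
    set (psi := fun x : InfCop (Sl O) (ClS O) => inf (proj1_sig (proj1_sig x))).
    assert (H1 : forall u, psi (e u) = u).
    { intros u. unfold psi; simpl. apply le_antisym; [apply inf_lb; apply le_refl|].
      apply inf_greatest; intros x Hx; exact Hx. }
    assert (H2 : forall x, e (psi x) = x).
    { intros x. apply InfCT_eq. destruct x as [S HSx]. simpl.
      destruct (InfC_C HS _ HSx) as [u ->]. unfold psi. simpl.
      f_equal. apply le_antisym; [apply inf_lb; apply le_refl|].
      apply inf_greatest; intros y Hy; exact Hy. }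
    exists e. split; [intros; reflexivity|]. split; [exact He|].
    exists psi. split; [apply (inv_frame_hom e psi He H1 H2)|split; assumption].
Qed.
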